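(* Let $g:A\to Y$ and $h:B\to Y$ be injective relations. Every synchronisation $\sigma$ of $(g,h)$ is the disjoint union of the paths it contains: $\sigma=\bigcup\{\gamma\subseteq\sigma:\gamma\text{ is a path}\}$, the paths in this union being pairwise disjoint; in particular every element of $\sigma$ (viewed as a subset of $A+B$) lies in a unique path, and that path is contained in $\sigma$.
   Context: A binary relation $R:A\to Z$ is injective if $aRz$ and $a'Rz$ imply $a=a'$; for $\alpha\subseteq A$, $R(\alpha)=\{z: aRz\text{ for some }a\in\alpha\}$. Given injective relations $g:A\to Y$ and $h:B\to Y$, a synchronisation is a pair $\langle\alpha,\beta\rangle$ with $\alpha\subseteq A$, $\beta\subseteq B$ and $g(\alpha)=h(\beta)$; such pairs are identified with subsets $\alpha+\beta$ of the disjoint union $A+B$, and inclusion, intersection, union and emptiness are taken via this identification. A path is a non-empty synchronisation that is minimal with respect to inclusion among non-empty synchronisations. *)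

(* Defs.v *)
Set Implicit Arguments.

Definition injective_rel {A Z : Type} (R : A -> Z -> Prop) : Prop :=
  forall (a a' : A) (z : Z), R a z -> R a' z -> a = a'.

Definition rimage {A Z : Type} (R : A -> Z -> Prop) (alpha : A -> Prop) : Z -> Prop :=
  fun z => exists a, alpha a /\ R a z.

(* Subsets of the disjoint union A + B; alpha + beta corresponds to S with
   alpha = S o inl and beta = S o inr. *)
Definition left_part {A B : Type} (S : A + B -> Prop) : A -> Prop := fun a => S (inl a).
Definition right_part {A B : Type} (S : A + B -> Prop) : B -> Prop := fun b => S (inr b).

Definition set_eq {X : Type} (S T : X -> Prop) : Prop := forall x, S x <-> T x.
Definition set_incl {X : Type} (S T : X -> Prop) : Prop := forall x, S x -> T x.
Definition set_nonempty {X : Type} (S : X -> Prop) : Prop := exists x, S x.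

Definition synchronisation {A B Y : Type} (g : A -> Y -> Prop) (h : B -> Y -> Prop)
  (S : A + B -> Prop) : Prop :=
  set_eq (rimage g (left_part S)) (rimage h (right_part S)).

Definition is_path {A B Y : Type} (g : A -> Y -> Prop) (h : B -> Y -> Prop)
  (S : A + B -> Prop) : Prop :=
  synchronisation g h S /\ set_nonempty S /\
  (forall T, synchronisation g h T -> set_nonempty T -> set_incl T S -> set_eq T S).

(* Main.v *)
Require Import Defs.
From Stdlib Require Import Classical.

Section S.
Variables (A B Y : Type) (g : A -> Y -> Prop) (h : B -> Y -> Prop).
Hypothesis Hg : injective_rel g.
Hypothesis Hh : injective_rel h.

Definition adj (u v : A + B) : Prop :=
  match u, v with
  | inl a, inr b => exists y, g a y /\ h b y
  | _, _ => False
  end.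

Definition closed (S : A + B -> Prop) : Prop :=
  forall u v, adj u v -> (S u <-> S v).

Definition C (x : A + B) : A + B -> Prop :=
  fun z => forall S, closed S -> S x -> S z.

Lemma C_closed x : closed (C x).
Proof.
  intros u v Huv; split; intros H S HS Sx; specialize (H S HS Sx);
  apply (HS u v Huv); exact H.
Qed.

Lemma C_self x : C x x.
Proof. intros S _ H; exact H. Qed.

Lemma sync_closed S : synchronisation g h S -> closed S.
Proof.
  intros HS [a|b] [a'|b'] Huv; simpl in Huv; try contradiction.
  destruct Huv as [y [Ga Hb]]. split; intro H.
  - destruct (proj1 (HS y) (ex_intro _ a (conj H Ga))) as [b0 [Sb0 Hb0]].
    rewrite (Hh _ _ _ Hb Hb0). exact Sb0.
  - destruct (proj2 (HS y) (ex_intro _ b' (conj H Hb))) as [a0 [Sa0 Ga0]].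
    rewrite (Hg _ _ _ Ga Ga0). exact Sa0.
Qed.

Lemma C_sub S x : synchronisation g h S -> S x -> set_incl (C x) S.
Proof. intros HS Sx z Hz. apply Hz; [apply sync_closed|]; assumption. Qed.

Lemma C_sync S x : synchronisation g h S -> S x -> synchronisation g h (C x).
Proof.
  intros HS Sx y; split.
  - intros [a [Ca Ga]].
    assert (Sa : S (inl a)) by (apply (@C_sub S x HS Sx); exact Ca).
    destruct (proj1 (HS y) (ex_intro _ a (conj Sa Ga))) as [b [Sb Hb]].
    exists b; split; [|exact Hb].
    apply (proj1 (C_closed x (inl a) (inr b) (ex_intro _ y (conj Ga Hb)))). exact Ca.
  - intros [b [Cb Hb]].
    assert (Sb : S (inr b)) by (apply (@C_sub S x HS Sx); exact Cb).
    destruct (proj2 (HS y) (ex_intro _ b (conj Sb Hb))) as [a [Sa Ga]].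
    exists a; split; [|exact Ga].
    apply (proj2 (C_closed x (inl a) (inr b) (ex_intro _ y (conj Ga Hb)))). exact Cb.
Qed.

Lemma C_path S x : synchronisation g h S -> S x -> is_path g h (C x).
Proof.
  intros HS Sx. split; [eapply C_sync; eauto|]. split; [exists x; apply C_self|].
  intros T HT [t Tt] Hinc.
  assert (Tx : T x).
  { destruct (classic (T x)) as [H|H]; [exact H|exfalso].
    assert (Hc : closed (fun z => ~ T z)).
    { intros u v Huv. pose proof (@sync_closed T HT u v Huv). tauto. }
    exact (Hinc t Tt _ Hc H Tt). }
  intro z; split; [apply Hinc|]. intro Cz. exact (@C_sub T x HT Tx z Cz).
Qed.

Lemma path_C gam x : is_path g h gam -> gam x -> set_eq gam (C x).
Proof.
  intros [Hs [_ Hm]] Gx.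
  assert (E : set_eq (C x) gam).
  { apply Hm; [eapply C_sync; eauto| exists x; apply C_self| apply C_sub; auto]. }
  intro z; specialize (E z); tauto.
Qed.
End S.

Theorem mainTheorem8 (A B Y : Type) (g : A -> Y -> Prop) (h : B -> Y -> Prop)
  (Hg : injective_rel g) (Hh : injective_rel h)
  (sigma : A + B -> Prop) (Hsigma : synchronisation g h sigma) :
  (* sigma is the union of the paths it contains *)
  (forall x, sigma x <->
     exists gamma, is_path g h gamma /\ set_incl gamma sigma /\ gamma x) /\
  (* the paths contained in sigma are pairwise disjoint (distinct => disjoint) *)
  (forall gamma1 gamma2,
     is_path g h gamma1 -> set_incl gamma1 sigma ->
     is_path g h gamma2 -> set_incl gamma2 sigma ->
     set_eq gamma1 gamma2 \/ (forall x, ~ (gamma1 x /\ gamma2 x))) /\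
  (* every element of sigma lies in a unique path, contained in sigma *)
  (forall x, sigma x ->
     exists gamma, is_path g h gamma /\ gamma x /\ set_incl gamma sigma /\
       (forall gamma', is_path g h gamma' -> gamma' x -> set_eq gamma' gamma)).
Proof.
  split; [|split].
  - intro x; split.
    + intro Sx. exists (@C A B Y g h x). split; [eapply C_path; eauto|].
      split; [apply C_sub; auto| apply C_self].
    + intros [gam [_ [Hi Gx]]]. exact (Hi x Gx).
  - intros g1 g2 P1 _ P2 _.
    destruct (classic (exists x, g1 x /\ g2 x)) as [[x [G1 G2]]|N].
    + left. pose proof (@path_C A B Y g h Hg Hh _ _ P1 G1). pose proof (@path_C A B Y g h Hg Hh _ _ P2 G2).
      intro z; specialize (H z); specialize (H0 z); tauto.
    + right. intros x Hx. apply N; exists x; exact Hx.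
  - intros x Sx. exists (@C A B Y g h x).
    split; [eapply C_path; eauto|]. split; [apply C_self|].
    split; [apply C_sub; auto|].
    intros gam P Gx. apply (@path_C A B Y g h Hg Hh _ _ P Gx).
Qed.
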